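(* Let $G_1,G_2,\dots$ be 3-symmetric graphs with $|G_i|\to\infty$, and let $H$ be a 3-symmetric graph with at least one vertex. Then as $i\to\infty$, \[t(K_3,\mathrm{Inflate}(G_i,H))\to\tfrac18,\quad t(P_3,\mathrm{Inflate}(G_i,H))\to\tfrac38,\quad t(K_2\cup K_1,\mathrm{Inflate}(G_i,H))\to\tfrac38,\quad t(\overline{K_3},\mathrm{Inflate}(G_i,H))\to\tfrac18.\]
   Context: All graphs are finite and simple; $|G|$ denotes the number of vertices. For a graph $G$ on $n$ vertices and a graph $F$ on $k$ vertices, the density $t(F,G)$ is the number of $k$-element subsets $S\subseteq V(G)$ whose induced subgraph is isomorphic to $F$, divided by $\binom{n}{k}$ (and $0$ if $n<k$). $K_3$ is the triangle, $P_3$ the path with 3 vertices and 2 edges, $K_2\cup K_1$ the 3-vertex graph with exactly one edge, and $\overline{K_3}$ the 3-vertex graph with no edges. A graph with at least 3 vertices is 3-symmetric if its densities of $K_3,P_3,K_2\cup K_1,\overline{K_3}$ are $1/8,3/8,3/8,1/8$ respectively; graphs with fewer than 3 vertices are considered trivially 3-symmetric. The inflation $\mathrm{Inflate}(G,H)$ (lexicographic product) is the graph with vertex set $V(G)\times V(H)$ in which $(g,h)$ and $(g',h')$ are adjacent iff either $g$ and $g'$ are adjacent in $G$, or $g=g'$ and $h,h'$ are adjacent in $H$. *)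

(* Defs.v *)
From HB Require Import structures.
From mathcomp Require Import all_boot all_order all_algebra.
Set Implicit Arguments. Unset Strict Implicit. Unset Printing Implicit Defensive.
Import Order.TTheory GRing.Theory Num.Theory.

Record graph := Graph {
  V : finType;
  adj : rel V;
  adj_sym : symmetric adj;
  adj_irr : irreflexive adj }.

Definition gorder (G : graph) : nat := #|V G|.

Definition induced_iso (F G : graph) (S : {set V G}) : bool :=
  [exists f : {ffun V F -> V G},
     [&& injectiveb f, (f @: setT) == S &
         [forall a, forall b, adj a b == adj (f a) (f b)]]].

Definition density (F G : graph) : rat :=
  if (gorder G < gorder F)%N then 0%R else
  ((#|[set S : {set V G} | (#|S| == gorder F) && induced_iso F S]|)%:R
     / ('C(gorder G, gorder F))%:R)%R.

Definition e_K3 : rel 'I_3 := fun a b => a != b.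
Definition e_P3 : rel 'I_3 := fun a b =>
  ((val a == 0) && (val b == 1)) || ((val a == 1) && (val b == 0)) ||
  ((val a == 1) && (val b == 2)) || ((val a == 2) && (val b == 1)).
Definition e_K2K1 : rel 'I_3 := fun a b =>
  ((val a == 0) && (val b == 1)) || ((val a == 1) && (val b == 0)).
Definition e_E3 : rel 'I_3 := fun _ _ => false.

Lemma e_K3_sym : symmetric e_K3. Proof. by move=> a b; rewrite /e_K3 eq_sym. Qed.
Lemma e_K3_irr : irreflexive e_K3. Proof. by move=> a; rewrite /e_K3 eqxx. Qed.
Lemma e_P3_sym : symmetric e_P3.
Proof. by move=> a b; rewrite /e_P3; case: (val a == 0); case: (val a == 1); case: (val a == 2);
  case: (val b == 0); case: (val b == 1); case: (val b == 2). Qed.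
Lemma e_P3_irr : irreflexive e_P3.
Proof. by move=> a; rewrite /e_P3; case: (val a == 0) /eqP => [->|] //;
  case: (val a == 1) /eqP => [->|] //; case: (val a == 2) /eqP => [->|] //; rewrite !andbF. Qed.
Lemma e_K2K1_sym : symmetric e_K2K1.
Proof. by move=> a b; rewrite /e_K2K1; case: (val a == 0); case: (val a == 1);
  case: (val b == 0); case: (val b == 1). Qed.
Lemma e_K2K1_irr : irreflexive e_K2K1.
Proof. by move=> a; rewrite /e_K2K1; case: (val a == 0) /eqP => [->|] //;
  case: (val a == 1) /eqP => [->|] //; rewrite !andbF. Qed.
Lemma e_E3_sym : symmetric e_E3. Proof. by []. Qed.
Lemma e_E3_irr : irreflexive e_E3. Proof. by []. Qed.

Definition K3 : graph := Graph e_K3_sym e_K3_irr.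
Definition P3 : graph := Graph e_P3_sym e_P3_irr.
Definition K2K1 : graph := Graph e_K2K1_sym e_K2K1_irr.
Definition E3 : graph := Graph e_E3_sym e_E3_irr.

Definition three_symmetric (G : graph) : Prop :=
  (3 <= gorder G)%N ->
  [/\ density K3 G = (1/8)%R, density P3 G = (3/8)%R,
      density K2K1 G = (3/8)%R & density E3 G = (1/8)%R].

Definition inflate_adj (G H : graph) : rel (V G * V H) :=
  fun x y => adj x.1 y.1 || ((x.1 == y.1) && adj x.2 y.2).

Lemma inflate_sym G H : symmetric (@inflate_adj G H).
Proof. by move=> x y; rewrite /inflate_adj adj_sym eq_sym (adj_sym _ x.2). Qed.
Lemma inflate_irr G H : irreflexive (@inflate_adj G H).
Proof. by move=> x; rewrite /inflate_adj !adj_irr andbF. Qed.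

Definition Inflate (G H : graph) : graph := Graph (@inflate_sym G H) (@inflate_irr G H).

Definition converges_to (u : nat -> rat) (l : rat) : Prop :=
  forall eps : rat, (0 < eps)%R ->
    exists N : nat, forall i : nat, (N <= i)%N -> (`|u i - l| < eps)%R.

(* Main.v *)
Require Import Defs.
From mathcomp Require Import all_boot all_order all_algebra.
From mathcomp Require Import ring lra.
Import Order.TTheory GRing.Theory Num.Theory.
Set Implicit Arguments. Unset Strict Implicit. Unset Printing Implicit Defensive.

Lemma transfer (F X Y : graph) (phi : V X -> V Y) (S : {set V X}) (x0 : V X) :
  {in S &, injective phi} ->
  {in S &, forall x y, adj x y = adj (phi x) (phi y)} ->
  induced_iso F S = induced_iso F (phi @: S).
Proof.
move=> pinj padj; apply/idP/idP.
- case/existsP => f /and3P [/injectiveP finj /eqP fim /forallP fadj].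
  have fS a : f a \in S by rewrite -fim imset_f.
  apply/existsP; exists [ffun a => phi (f a)]; apply/and3P; split.
  + apply/injectiveP => a b; rewrite !ffunE => e; apply: finj; exact: pinj.
  + rewrite -fim -imset_comp; apply/eqP/eq_imset => a; by rewrite ffunE.
  + apply/forallP=> a; apply/forallP => b; rewrite !ffunE -padj ?fS //.
    by move/forallP: (fadj a) => /(_ b).
- case/existsP => g /and3P [/injectiveP ginj /eqP gim /forallP gadj].
  have ex a : exists2 x, x \in S & phi x = g a.
    have : g a \in phi @: S by rewrite -gim imset_f.
    by case/imsetP => x xS e; exists x.
  pose f := [ffun a => odflt x0 [pick x in S | phi x == g a]].
  have fP a : f a \in S /\ phi (f a) = g a.
    rewrite ffunE; case: pickP => [x /andP[xS /eqP e]| none] //=.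
    case: (ex a) => x xS e; move: (none x); by rewrite xS e eqxx.
  apply/existsP; exists f; apply/and3P; split.
  + apply/injectiveP => a b e; apply: ginj.
    by rewrite -(proj2 (fP a)) -(proj2 (fP b)) e.
  + rewrite eqEsubset; apply/andP; split.
    * by apply/subsetP => x /imsetP [a _ ->]; case: (fP a).
    * apply/subsetP => x xS.
      have : phi x \in g @: setT by rewrite gim imset_f.
      case/imsetP => a _ e; apply/imsetP; exists a => //.
      case: (fP a) => fa fe; apply: pinj => //; by rewrite fe.
  + apply/forallP=> a; apply/forallP => b.
    case: (fP a) (fP b) => fa ea [fb eb].
    by rewrite padj // ea eb; move/forallP: (gadj a) => /(_ b).
Qed.

Section Count.
Variables (G H : graph).
Local Notation VI := (V G * V H)%type.
Definition pis (S : {set VI}) : {set V G} := [set x.1 | x in S].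
Definition Aset : {set {set VI}} := [set S : {set VI} | (#|S| == 3) && (#|pis S| == 3)].

Lemma card3_le (T : finType) (x y z : T) : #|[set x; y; z]| <= 3.
Proof.
rewrite -setUA cardsU1 cardsU1 cards1.
by case: (x \notin _); case: (y \notin _).
Qed.

Lemma fiber_card (T : {set V G}) : #|T| = 3 ->
  #|[set S in Aset | pis S == T]| = #|V H| ^ 3.
Proof.
move=> cT.
have sz : size (enum T) = 3 by rewrite -cardE.
have un := enum_uniq (mem T).
have memT x : (x \in enum T) = (x \in T) by rewrite mem_enum.
case E: (enum T) sz un memT => [|a [|b [|c [|d s]]]] // _ un memT.
move: un; rewrite /= !inE !andbT => /andP [/norP [ab ac] bc].
have Teq : T = [set a; b; c].
  by apply/setP => x; rewrite -memT !inE orbA.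
pose Phi (p : V H * V H * V H) : {set VI} := [set (a, p.1.1); (b, p.1.2); (c, p.2)].
have piPhi p : pis (Phi p) = T.
  by rewrite Teq /pis !(imsetU, imsetU1, imset_set1).
have cPhi p : #|Phi p| = 3.
  apply/eqP; rewrite eqn_leq card3_le /=.
  by rewrite -{1}cT -(piPhi p) leq_imset_card.
have -> : [set S in Aset | pis S == T] = Phi @: setT.
  apply/setP => S; rewrite !inE; apply/idP/idP.
  - case/andP => /andP [/eqP cS _] /eqP pS.
    have get t : t \in T -> exists y, (t, y) \in S.
      by rewrite -pS => /imsetP [[t' y] tS /= ->]; exists y.
    have [|pa Ha] := get a; first by rewrite Teq !inE eqxx.
    have [|pb Hb] := get b; first by rewrite Teq !inE eqxx orbT.
    have [|pc Hc] := get c; first by rewrite Teq !inE eqxx !orbT.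
    apply/imsetP; exists (pa, pb, pc) => //; apply/eqP; rewrite eq_sym eqEcard.
    rewrite cPhi cS leqnn andbT.
    by apply/subsetP => x; rewrite !inE => /orP [/orP [] | ] /eqP ->.
  - case/imsetP => p _ ->. by rewrite cPhi piPhi !eqxx cT.
rewrite card_imset ?cardsT ?card_prod //.
  by rewrite expnS expnS expn1 mulnA.
move=> p q e.
have mem t y r : (t, y) \in Phi r -> ((t == a) && (y == r.1.1)) || ((t == b) && (y == r.1.2)) || ((t == c) && (y == r.2)).
  by rewrite !inE !xpair_eqE.
have /mem : (a, p.1.1) \in Phi q by rewrite -e !inE eqxx.
rewrite eqxx (negbTE ab) (negbTE ac) /= ?orbF => /eqP h1.
have /mem : (b, p.1.2) \in Phi q by rewrite -e !inE eqxx /= orbT.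
rewrite (eq_sym b a) (negbTE ab) eqxx (negbTE bc) /= orbF => /eqP h2.
have /mem : (c, p.2) \in Phi q by rewrite -e !inE eqxx /= !orbT.
rewrite (eq_sym c a) (negbTE ac) (eq_sym c b) (negbTE bc) eqxx /= => /eqP h3.
by case: p q h1 h2 h3 {e} => [[? ?] ?] [[? ?] ?] /= -> -> ->.
Qed.

Lemma count_Q (Q : pred {set V G}) : (forall T, Q T -> #|T| == 3) ->
  #|[set S in Aset | Q (pis S)]| = #|[set T | Q T]| * #|V H| ^ 3.
Proof.
move=> hQ.
rewrite -sum1_card (partition_big pis Q); last by move=> S; rewrite !inE => /andP [].
rewrite -sum_nat_const /=; apply: eq_big => [T|T QT]; first by rewrite inE.
rewrite -(@fiber_card T); last by apply/eqP; exact: hQ.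
rewrite -sum1_card; apply: eq_bigl => S; rewrite !inE.
apply/idP/idP.
- by case/andP => /andP [-> _] ->.
- by case/andP => -> /eqP e; rewrite e QT eqxx.
Qed.

Lemma key1 (F : graph) (S : {set VI}) : S \in Aset ->
  @induced_iso F (Inflate G H) S = induced_iso F (pis S).
Proof.
rewrite inE => /andP [/eqP cS /eqP cP].
case: (set_0Vmem S) => [S0 | [x0 _]]; first by rewrite S0 cards0 in cS.
have inj : {in S &, injective (fun x : VI => x.1)}.
  by apply/imset_injP; rewrite -/(pis S) cP cS.
apply: (@transfer F (Inflate G H) G (fun x : VI => x.1) S x0) => // x y xS yS.
rewrite /= /inflate_adj; case: (eqVneq x.1 y.1) => [e|ne].
- have xy := inj x y xS yS e; by rewrite xy !adj_irr.
- by rewrite andFb orbF.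
Qed.

Definition Fset (F X : graph) := [set S : {set V X} | (#|S| == 3) && induced_iso F S].

Lemma FI_A F : #|Fset F (Inflate G H) :&: Aset| = #|Fset F G| * #|V H| ^ 3.
Proof.
have -> : Fset F (Inflate G H) :&: Aset = [set S in Aset | pis S \in Fset F G].
  apply/setP => S; rewrite inE [in RHS]inE; case SA: (S \in Aset); rewrite ?andbF ?andbT //=.
  rewrite !inE key1 //; move: SA; rewrite inE => /andP [-> ->]; by [].
rewrite count_Q; last by move=> T HT; move: (HT : T \in Fset F G); rewrite inE => /andP [].
by congr (_ * _); apply: eq_card => T; rewrite inE.
Qed.

Lemma cardA : #|Aset| = 'C(#|V G|, 3) * #|V H| ^ 3.
Proof.
have -> : Aset = [set S in Aset | #|pis S| == 3].
  apply/setP => S; rewrite !inE; by rewrite -andbA andbb.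
by rewrite (@count_Q (fun T => #|T| == 3)) // card_draws.
Qed.

Lemma upper F : #|Fset F (Inflate G H)| <=
   #|Fset F G| * #|V H| ^ 3 + ('C(#|V G| * #|V H|, 3) - #|Aset|).
Proof.
rewrite -(cardsID Aset (Fset F (Inflate G H))) FI_A leq_add2l.
pose D3 := [set S : {set VI} | #|S| == 3].
have cD : #|D3| = 'C(#|V G| * #|V H|, 3) by rewrite card_draws card_prod.
have AD : Aset \subset D3 by apply/subsetP => S; rewrite !inE => /andP [].
rewrite -cD -(cardsID Aset D3) (setIidPr AD) addKn.
apply: subset_leq_card; apply/subsetP => S; rewrite !inE => /andP [-> /andP [-> _]].
by [].
Qed.

Lemma lower F : #|Fset F G| * #|V H| ^ 3 <= #|Fset F (Inflate G H)|.
Proof. by rewrite -FI_A subset_leq_card // subsetIl. Qed.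
Lemma cardA_le : (#|Aset| <= 'C(#|V G| * #|V H|, 3))%N.
Proof.
rewrite -card_prod -card_draws; apply: subset_leq_card.
by apply/subsetP => S; rewrite !inE => /andP [].
Qed.
End Count.

Local Open Scope ring_scope.

Lemma binom3 (m : nat) : ('C(m, 3)%:R * 6 = m%:R * (m%:R - 1) * (m%:R - 2) :> rat).
Proof.
case: m => [|[|[|m]]].
- by rewrite bin_small // mul0r mul0r.
- by rewrite bin_small // mul0r subrr mulr0 mul0r.
- by rewrite bin_small // mul0r -!natr1; ring.
have := bin_ffact m.+3 3; rewrite !ffactnS ffactn0 => h.
have -> : (6 : rat) = (3`!)%:R by [].
rewrite -natrM h !natrM /= -!natr1; ring.
Qed.

Lemma ratio (n h : nat) : (3 <= n)%N -> (0 < h)%N ->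
  n%:R * ('C(n*h,3)%:R - ('C(n,3) * h^3)%:R) <= 18 * ('C(n*h,3)%:R : rat).
Proof.
move=> n3 h1.
have N3 : (3 <= n%:R :> rat) by rewrite -[3]/(3%:R) ler_nat.
have H1 : (1 <= h%:R :> rat) by rewrite ler1n.
rewrite natrM natrX.
have e1 := binom3 (n*h); have e2 := binom3 n.
rewrite natrM in e1.
set x := 'C(n * h, 3)%:R in e1 *; set y := 'C(n, 3)%:R in e2 *.
set N := n%:R in N3 e1 e2 *; set hh := h%:R in H1 e1 *.
have -> : x = N * hh * (N * hh - 1) * (N * hh - 2) / 6 by rewrite -e1 mulfK.
have -> : y = N * (N - 1) * (N - 2) / 6 by rewrite -e2 mulfK.
set K := N * hh.
have K3 : 3 <= K by rewrite /K; nra.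
have inner : 0 <= 15 * K^+2 - 54 * K + 36 + 3 * N * K + 2 * N * hh^+2 - 2 * N.
  have : 0 <= (K - 3) * (15 * K - 9) by apply: mulr_ge0; lra.
  have : 0 <= N * (3 * K - 2) by apply: mulr_ge0; lra.
  have : 0 <= N * hh^+2 by apply: mulr_ge0; [lra| exact: sqr_ge0].
  nra.
have KN : 0 <= K / 6 by apply: divr_ge0; lra.
rewrite -subr_ge0.
have -> : 18 * (K * (K - 1) * (K - 2) / 6) - N * (K * (K - 1) * (K - 2) / 6 - N * (N - 1) * (N - 2) / 6 * hh ^+ 3)
   = K / 6 * (15 * K^+2 - 54 * K + 36 + 3 * N * K + 2 * N * hh^+2 - 2 * N) by rewrite /K; field.
exact: mulr_ge0.
Qed.


Lemma dens_eq (F X : graph) : gorder F = 3 -> (3 <= gorder X)%N ->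
  density F X = (#|Fset F X|%:R / ('C(gorder X, 3))%:R)%R.
Proof. by move=> hF hX; rewrite /density hF ltnNge hX. Qed.

Lemma bound (F G H : graph) (t : rat) : gorder F = 3 -> 0 <= t <= 1 ->
  (3 <= gorder G)%N -> (0 < gorder H)%N -> density F G = t ->
  `|density F (Inflate G H) - t| <= 18 / (gorder G)%:R.
Proof.
move=> hF /andP [t0 t1] hG hH hd.
have gI : gorder (Inflate G H) = (gorder G * gorder H)%N by rewrite /gorder card_prod.
have hI : (3 <= gorder (Inflate G H))%N by rewrite gI; apply: leq_trans hG _; rewrite leq_pmulr.
rewrite dens_eq // gI.
move: hd; rewrite dens_eq // => hd.
have lo := lower G H F; have up := upper G H F.
have ca := cardA G H; have cl := cardA_le G H.
have rt := ratio hG hH.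
rewrite /gorder in hG hH rt gI hd *.
set n := #|V G| in hG hH rt ca cl up lo hd *.
set h := #|V H| in hG hH rt ca cl up lo hd *.
set x := #|Fset F (Inflate G H)| in up lo *.
set c := #|Fset F G| in up lo hd *.
set A := #|Aset G H| in up ca cl *.
have Mpos : (0 < ('C(n * h, 3))%:R :> rat) by rewrite ltr0n bin_gt0 -gI.
have Cpos : (0 < ('C(n, 3))%:R :> rat) by rewrite ltr0n bin_gt0.
have npos : (0 < n%:R :> rat) by rewrite ltr0n; apply: leq_trans hG.
move/(congr1 (fun q => q * ('C(n, 3))%:R)): hd; rewrite mulfVK ?gt_eqF // => hc.
rewrite ca in up cl.
have lo' : (c%:R * h%:R^+3 <= x%:R :> rat) by rewrite -natrX -natrM ler_nat.
have up' : (x%:R <= c%:R * h%:R^+3 + ('C(n * h, 3)%:R - 'C(n, 3)%:R * h%:R^+3) :> rat).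
  by move: up; rewrite -(ler_nat rat) natrD natrB // !natrM !exprS expr0 !mulr1.
have cl' : ('C(n, 3)%:R * h%:R^+3 <= 'C(n * h, 3)%:R :> rat).
  by rewrite -natrX -natrM ler_nat.
rewrite natrM natrX in rt.
rewrite hc in lo' up'.
clear up lo hc cl ca.
set M := ('C(n * h, 3))%:R in Mpos rt up' cl' *.
set a := ('C(n, 3))%:R * h%:R ^+ 3 in rt up' cl' lo'.
have ea : t * 'C(n, 3)%:R * h%:R ^+ 3 = t * a by rewrite -mulrA.
rewrite ea in lo' up'.
have P1 : 0 <= t * M - t * a by rewrite -mulrBr; apply: mulr_ge0 => //; rewrite subr_ge0.
have P2 : 0 <= M - a - (t * M - t * a).
  by rewrite -mulrBr -[X in X - _]mul1r -mulrBl; apply: mulr_ge0; rewrite subr_ge0.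
have nb : `|x%:R - t * M| <= M - a by rewrite ler_norml; apply/andP; split; lra.
have -> : x%:R / M - t = (x%:R - t * M) / M by field; rewrite gt_eqF.
rewrite normrM (gtr0_norm (x := M^-1)) ?invr_gt0 //.
apply: le_trans (_ : (M - a) / M <= _).
  by rewrite ler_pM2r ?invr_gt0.
rewrite ler_pdivrMr // mulrAC ler_pdivlMr // mulrC.
exact: rt.
Qed.


Lemma conv (F : graph) (t : rat) (G : nat -> graph) (H : graph) :
  gorder F = 3 -> 0 <= t <= 1 ->
  (forall i, (3 <= gorder (G i))%N -> density F (G i) = t) ->
  (forall M : nat, exists N : nat, forall i, (N <= i)%N -> (M <= gorder (G i))%N) ->
  (0 < gorder H)%N ->
  converges_to (fun i => density F (Inflate (G i) H)) t.
Proof.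
move=> hF ht hd hgr hH eps e0.
have b0 : 0 <= 18 / eps by apply: divr_ge0 => //; exact: ltW.
have bK := archi_boundP b0.
set K := Num.Def.archi_bound (18 / eps) in bK.
have [N hN] := hgr (maxn 3 K).
exists N => i /hN; rewrite geq_max => /andP [g3 gK].
apply: le_lt_trans (@bound F (G i) H t hF ht g3 hH (hd i g3)) _.
have npos : (0 < (gorder (G i))%:R :> rat) by rewrite ltr0n; apply: leq_trans g3.
rewrite ltr_pdivrMr // mulrC -ltr_pdivrMr //.
apply: lt_le_trans bK _; by rewrite ler_nat.
Qed.

Local Close Scope ring_scope.

Theorem mainTheorem18 (G : nat -> graph) (H : graph) :
  (forall i, three_symmetric (G i)) ->
  (forall M : nat, exists N : nat, forall i, (N <= i)%N -> (M <= gorder (G i))%N) ->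
  three_symmetric H ->
  (0 < gorder H)%N ->
  [/\ converges_to (fun i => density K3 (Inflate (G i) H)) (1/8)%R,
      converges_to (fun i => density P3 (Inflate (G i) H)) (3/8)%R,
      converges_to (fun i => density K2K1 (Inflate (G i) H)) (3/8)%R &
      converges_to (fun i => density E3 (Inflate (G i) H)) (1/8)%R].
Proof.
move=> hG hgr _ hH.
have o3 : forall F : graph, V F = 'I_3 -> gorder F = 3.
  by move=> F e; rewrite /gorder e card_ord.
split; apply: conv => //; try (apply: o3; reflexivity);
  try (apply/andP; split; lra);
  by move=> i /(hG i) [].
Qed.
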